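(* Let $\mathcal{A},\mathcal{B}$ be standard operator algebras on infinite-dimensional Banach spaces $\mathcal{X},\mathcal{Y}$, and let $\phi:\mathcal{A}\to\mathcal{B}$ be a bijection such that $\phi$ is 2-quadratic preserving in both directions. Then $\phi(0)=0$ and $\phi(\mathbb{F}I)=\mathbb{F}I$; in particular $\phi(I)=\lambda I$ for some scalar $\lambda$.
   Context: A standard operator algebra on $\mathcal{X}$ is a norm-closed subalgebra of $\mathcal{B}(\mathcal{X})$ containing the identity $I$ and all finite-rank operators; $\mathbb{F}\in\{\mathbb{R},\mathbb{C}\}$ is the scalar field. An operator $T$ is quadratic if there exist scalars $a,b$ with $(T-aI)(T-bI)=0$. $\phi_2:\mathcal{A}\otimes M_2\to\mathcal{B}\otimes M_2$ is $\phi_2((a_{ij})_{2\times 2})=(\phi(a_{ij}))_{2\times 2}$, and ''2-quadratic preserving in both directions'' means $T\in\mathcal{A}\otimes M_2$ is quadratic iff $\phi_2(T)$ is quadratic. *)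

(* Defs.v *)
From HB Require Import structures.
From mathcomp Require Import all_boot all_order all_algebra.
From mathcomp Require Import complex.
From mathcomp Require Import all_classical all_reals all_analysis.
Set Implicit Arguments. Unset Strict Implicit. Unset Printing Implicit Defensive.
Import Order.TTheory GRing.Theory Num.Theory.
Import numFieldNormedType.Exports.
Local Open Scope ring_scope.
Local Open Scope classical_set_scope.

Definition field_iso (K1 K2 : numFieldType) : Prop :=
  exists f : {rmorphism K1 -> K2}, bijective f /\ forall x : K1, `|f x| = f `|x|.

Definition R_or_C (R : realType) (K : numFieldType) : Prop :=
  field_iso K R \/ field_iso K (R[i])%C.

Section Ops.
Variables (K : numFieldType) (X : normedModType K).

Definition bounded_op (T : X -> X) : Prop :=
  (forall (a : K) (u v : X), T (a *: u + v) = a *: T u + T v) /\ continuous T.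

Definition idop : X -> X := fun x => x.
Definition addop (S T : X -> X) : X -> X := fun x => S x + T x.
Definition scaleop (a : K) (T : X -> X) : X -> X := fun x => a *: T x.
Definition compop (S T : X -> X) : X -> X := fun x => S (T x).

Definition finite_rank (T : X -> X) : Prop :=
  exists n (v : 'I_n -> X), forall x, exists c : 'I_n -> K,
    T x = \sum_(i < n) c i *: v i.

Definition infinite_dimensional : Prop :=
  forall n (v : 'I_n -> X), exists x : X,
    forall c : 'I_n -> K, x <> \sum_(i < n) c i *: v i.

Definition standard_op_alg (A : set (X -> X)) : Prop :=
  (forall T, A T -> bounded_op T) /\
  (forall S T, A S -> A T -> A (addop S T)) /\
  (forall a T, A T -> A (scaleop a T)) /\
  (forall S T, A S -> A T -> A (compop S T)) /\
  A idop /\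
  (forall T, bounded_op T -> finite_rank T -> A T) /\
      (* closed in operator norm *)
  (forall T, bounded_op T ->
        (forall e : K, 0 < e -> exists S, A S /\
            forall x, `|T x - S x| <= e * `|x|) -> A T).

(* operator matrices in A (x) M_2, acting on X (+) X *)
Definition opmx2 := 'I_2 -> 'I_2 -> (X -> X).

Definition mulop2 (M N : opmx2) : opmx2 :=
  fun i j x => \sum_(k < 2) M i k (N k j x).

Definition subscal2 (M : opmx2) (a : K) : opmx2 :=
  fun i j x => M i j x - (if i == j then a *: x else 0).

Definition quadratic2 (M : opmx2) : Prop :=
  exists a b : K, mulop2 (subscal2 M a) (subscal2 M b) = fun _ _ _ => 0.

End Ops.

(* Main.v *)
Require Import Defs.
From HB Require Import structures.
From mathcomp Require Import all_boot all_order all_algebra.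
From mathcomp Require Import all_classical all_reals all_analysis.
From mathcomp Require Import complex ring lra.
Import Order.TTheory GRing.Theory Num.Theory.
Import numFieldNormedType.Exports.
Local Open Scope ring_scope.
Local Open Scope classical_set_scope.
Set Implicit Arguments. Unset Strict Implicit. Unset Printing Implicit Defensive.

Section OpLemmas.
Variables (K : numFieldType) (X : normedModType K).

Definition mx2 (a b c d : X -> X) : opmx2 X :=
  fun i j => if val i == 0%N then (if val j == 0%N then a else b)
             else (if val j == 0%N then c else d).

Definition zop : X -> X := fun _ => 0.
Definition sc (c : K) : X -> X := scaleop c (@idop K X).

Lemma mulop2E (M N : opmx2 X) i j x :
  mulop2 M N i j x = M i ord0 (N ord0 j x) + M i ord_max (N ord_max j x).
Proof. rewrite /mulop2 !big_ord_recl big_ord0 addr0; congr (_ + _); congr (M i _ (N _ j x)); exact: val_inj. Qed.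

Lemma entry (M : opmx2 X) (i j : 'I_2) x :
  M = (fun _ _ _ => 0) -> M i j x = 0.
Proof. by move=> ->. Qed.

Lemma lin0 (S : X -> X) : bounded_op S -> S 0 = 0.
Proof.
move=> [HS _]; have := HS 1 0 0; rewrite !scale1r addr0 => h.
by apply: (addIr (S 0)); rewrite add0r -h.
Qed.

Lemma linZ (S : X -> X) (a : K) x : bounded_op S -> S (a *: x) = a *: S x.
Proof. by move=> bS; have := bS.1 a x 0; rewrite addr0 (lin0 bS) addr0. Qed.
Lemma linD (S : X -> X) x y : bounded_op S -> S (x + y) = S x + S y.
Proof. by move=> bS; have := bS.1 1 x y; rewrite !scale1r. Qed.

Lemma quad_sc c S : bounded_op S -> quadratic2 (mx2 (sc c) S zop (sc c)).
Proof.
move=> bS; exists c, c; apply/funext => i; apply/funext => j; apply/funext => x.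
rewrite mulop2E /subscal2 /mx2 /sc /scaleop /idop /zop.
case: i => [[|[|i]] Hi] //=; case: j => [[|[|j]] Hj] //=;
  rewrite ?subrr ?(lin0 bS) ?subr0 ?scaler0 ?addr0 ?add0r ?subrr //.
Qed.

Lemma scal_char T C : quadratic2 (mx2 T (@idop K X) C T) -> exists c, T = sc c.
Proof.
move=> [a [b E]]; exists ((a + b) / 2); apply/funext => x.
have := entry ord0 ord_max x E.
rewrite mulop2E /subscal2 /mx2 /sc /scaleop /idop /=.
rewrite !subr0 => h.
have h2 : (2 : K) *: T x = (a + b) *: x.
  rewrite scaler_nat mulr2n scalerDl; apply/eqP; rewrite -subr_eq0; apply/eqP.
  by rewrite -h opprD addrACA.
have n2 : (2 : K) != 0 by rewrite pnatr_eq0.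
by rewrite mulrC -scalerA -h2 scalerA mulVf // scale1r.
Qed.



Lemma zero_char Z S0 : quadratic2 (mx2 Z (@idop K X) Z Z) ->
  quadratic2 (mx2 Z S0 Z Z) -> bounded_op S0 -> (forall k, S0 <> sc k) -> Z = zop.
Proof.
move=> /scal_char [c ->] [a [b E]] bS ns.
have Hc : c = 0.
  apply/eqP/negP => /negP cn0.
  apply: (ns (- ((c - a) * (c - b)) / c)); apply/funext => x.
  have := entry ord0 ord0 x E.
  rewrite mulop2E /subscal2 /mx2 /sc /scaleop /idop /= !subr0 (linZ _ _ bS).
  rewrite -!scalerBl scalerA => /eqP; rewrite addr_eq0 => /eqP h.
  apply: (scalerI cn0); rewrite scalerA mulrCA mulfV // mulr1 scaleNr h opprK //.
by apply/funext => x; rewrite /sc /scaleop Hc scale0r.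
Qed.

End OpLemmas.
Arguments sc {K} X c.
Arguments zop {K} X _.
Lemma sc0 (K : numFieldType) (X : normedModType K) : sc X 0 = zop X.
Proof. by apply/funext => x; rewrite /sc /scaleop scale0r. Qed.
Lemma sc1 (K : numFieldType) (X : normedModType K) : sc X 1 = @idop K X.
Proof. by apply/funext => x; rewrite /sc /scaleop scale1r. Qed.

Section CX.
Local Open Scope complex_scope.
Variable R : rcfType.
Implicit Types z w : R[i].
Lemma ReD' z w : complex.Re (z + w) = complex.Re z + complex.Re w.
Proof. by case: z => ? ?; case: w => ? ?. Qed.
Lemma ReM' t z : complex.Re (t%:C * z) = t * complex.Re z.
Proof. by case: z => x y; simpc. Qed.
Lemma Re_rc t : complex.Re (t%:C : R[i]) = t. Proof. by []. Qed.
Lemma rcD s t : (s + t)%:C = s%:C + t%:C :> R[i].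
Proof. by simpc. Qed.
Lemma rcM s t : (s * t)%:C = s%:C * t%:C :> R[i].
Proof. by simpc. Qed.
Lemma rc_norm t : `|t%:C| = `|t|%:C :> R[i].
Proof. by rewrite normc_def /= expr0n addr0 sqrtr_sqr. Qed.
Lemma ReNi z : complex.Re (- 'i * z) = complex.Im z.
Proof. by case: z => x y; simpc. Qed.
Lemma ii : 'i * 'i = -1 :> R[i].
Proof. by rewrite -expr2 sqr_i. Qed.
Lemma pos_real z : 0 <= z -> z = (complex.Re z)%:C /\ 0 <= complex.Re z.
Proof.
move=> h; have := h; rewrite lecE => /andP [/eqP i0 r0]; split => //.
by case: z i0 {h r0} => x y /= ->.
Qed.
Lemma Rei : complex.Re 'i = 0 :> R. Proof. by []. Qed.
End CX.

Section HBsec.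
Variables (R : realType) (K : numFieldType) (X : normedModType K).
Variables (rs : R -> K) (re : K -> R).
Hypothesis rsD : forall s t, rs (s + t) = rs s + rs t.
Hypothesis rsM : forall s t, rs (s * t) = rs s * rs t.
Hypothesis rs1 : rs 1 = 1.
Hypothesis rs_norm : forall t, `|rs t| = rs `|t|.
Hypothesis reD : forall a b, re (a + b) = re a + re b.
Hypothesis reM : forall t a, re (rs t * a) = t * re a.
Hypothesis re_rs : forall t, re (rs t) = t.
Hypothesis re_pos : forall a, 0 <= a -> 0 <= re a /\ a = rs (re a).

Lemma rs0 : rs 0 = 0.
Proof. by apply: (addIr (rs 0)); rewrite add0r -rsD addr0. Qed.
Lemma rsN t : rs (- t) = - rs t.
Proof. by apply/eqP; rewrite -addr_eq0 -rsD addNr rs0. Qed.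
Lemma rsB s t : rs (s - t) = rs s - rs t.
Proof. by rewrite rsD rsN. Qed.
Lemma rsV t : t != 0 -> rs t * rs t^-1 = 1.
Proof. by move=> t0; rewrite -rsM mulfV // rs1. Qed.
Lemma re0 : re 0 = 0.
Proof. by rewrite -rs0 re_rs. Qed.
Lemma reN a : re (- a) = - re a.
Proof. by apply/eqP; rewrite -addr_eq0 -reD addNr re0. Qed.
Lemma re_mono a b : a <= b -> re a <= re b.
Proof.
by rewrite -subr_ge0 => /re_pos [+ _]; rewrite reD reN subr_ge0.
Qed.

Definition nrm (x : X) := re `|x|.
Lemma nrm_ge0 x : 0 <= nrm x.
Proof. by have [] := re_pos (normr_ge0 x). Qed.
Lemma nrm_tri x y : nrm (x + y) <= nrm x + nrm y.
Proof. by rewrite /nrm -reD; apply: re_mono; apply: ler_normD. Qed.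
Lemma nrmZ t x : nrm (rs t *: x) = `|t| * nrm x.
Proof. by rewrite /nrm normrZ rs_norm reM. Qed.
Lemma nrmN x : nrm (- x) = nrm x.
Proof. by rewrite /nrm normrN. Qed.
Lemma nrm_pos x : x != 0 -> 0 < nrm x.
Proof.
move=> x0; rewrite lt_def nrm_ge0 andbT; apply/eqP => h.
have [_ e] := re_pos (normr_ge0 x); move: e; rewrite -/(nrm x) h rs0.
by move/eqP; rewrite normr_eq0 (negbTE x0).
Qed.
Lemma rsN1 (x : X) : rs (-1) *: x = - x.
Proof. by rewrite rsN rs1 scaleN1r. Qed.

Variable x0 : X.
Hypothesis x0n0 : x0 != 0.

Definition G0 : set (X * R) := fun p => exists t, p = (rs t *: x0, t * nrm x0).

Definition good (G : set (X * R)) :=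
  [/\ (forall x r s, G (x, r) -> G (x, s) -> r = s),
      (forall x r y s t, G (x, r) -> G (y, s) -> G (rs t *: x + y, t * r + s)) &
      (forall x r, G (x, r) -> r <= nrm x)].

Lemma good_G0 : good G0.
Proof.
split.
- move=> x r s [t [-> ->]] [t' [e ->]]; congr (_ * _).
  move/eqP: e; rewrite -subr_eq0 -scalerBl scaler_eq0 (negbTE x0n0) orbF.
  rewrite subr_eq0 => /eqP /(congr1 re); rewrite !re_rs => ->.
  by [].
- move=> x r y s t [u [-> ->]] [v [-> ->]]; exists (t * u + v).
  by rewrite scalerA -rsM -scalerDl -rsD mulrA mulrDl.
- move=> x r [t [-> ->]]; rewrite nrmZ; apply: ler_wpM2r; first exact: nrm_ge0.
  exact: ler_norm.
Qed.

Definition PG (G : set (X * R)) := good (G `|` G0).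

Lemma two_pts (F : set (set (X * R))) : F `<=` PG -> total_on F subset ->
  forall p q, ((\bigcup_(Y in F) Y) `|` G0) p -> ((\bigcup_(Y in F) Y) `|` G0) q ->
  exists H, [/\ good H, H `<=` (\bigcup_(Y in F) Y) `|` G0, H p & H q].
Proof.
move=> FP tot p q [[Gi Fi Gp]|G0p] [[Gj Fj Gq]|G0q].
- have [ij|ji] := tot _ _ Fi Fj.
  + exists (Gj `|` G0); split; [exact: FP|by move=> w [?|?]; [left; exists Gj|right]
      |left; exact: ij|by left].
  + exists (Gi `|` G0); split; [exact: FP|by move=> w [?|?]; [left; exists Gi|right]
      |by left|left; exact: ji].
- exists (Gi `|` G0); split; [exact: FP|by move=> w [?|?]; [left; exists Gi|right]
      |by left|by right].
- exists (Gj `|` G0); split; [exact: FP|by move=> w [?|?]; [left; exists Gj|right]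
      |by right|by left].
- exists G0; split; [exact: good_G0|by move=> w ?; right|by []|by []].
Qed.

Lemma chain_union (F : set (set (X * R))) : F `<=` PG -> total_on F subset ->
  PG (\bigcup_(Y in F) Y).
Proof.
move=> FP tot; have TP := two_pts FP tot; split.
- move=> x r s hr hs; have [H [[Hf _ _] _ Hp Hq]] := TP _ _ hr hs; exact: Hf Hp Hq.
- move=> x r y s t hr hs; have [H [[_ Hl _] HU Hp Hq]] := TP _ _ hr hs.
  by apply: HU; apply: Hl Hp Hq.
- move=> x r hr; have [H [[_ _ Hd] _ Hp _]] := TP _ _ hr hr; exact: Hd Hp.
Qed.

Lemma extend_dom (M : set (X * R)) : good M -> G0 `<=` M -> forall z,
  ~ (exists r, M (z, r)) -> exists c, good (fun p => exists t y s, M (y, s) /\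
     p = (rs t *: z + y, t * c + s)).
Proof.
move=> [Mf Ml Md] G0M z Hz.
have M00 : M (0, 0) by apply: G0M; exists 0; rewrite rs0 scale0r mul0r.
have Lbound y s y' s' : M (y, s) -> M (y', s') ->
    s - nrm (y - z) <= nrm (y' + z) - s'.
  move=> hy hy'; have := Md _ _ (Ml _ _ _ _ 1 hy hy'); rewrite rs1 scale1r mul1r.
  have -> : y + y' = (y - z) + (y' + z) by rewrite addrACA addNr addr0.
  have := nrm_tri (y - z) (y' + z); lra.
pose L := fun u => exists y s, M (y, s) /\ u = s - nrm (y - z).
have Lne : L !=set0 by exists (0 - nrm (0 - z)); exists 0, 0.
have Lub : has_ubound L.
  by exists (nrm (0 + z) - 0) => _ [y [s [hy ->]]]; apply: Lbound hy M00.
pose c := sup L.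
have cge y s : M (y, s) -> s - nrm (y - z) <= c.
  by move=> hy; apply: ub_le_sup Lub _ _; exists y, s.
have cle y s : M (y, s) -> c <= nrm (y + z) - s.
  by move=> hy; apply: ge_sup Lne _ => _ [y' [s' [hy' ->]]]; apply: Lbound hy' hy.
exists c; split.
- move=> x r r' [t [y [s [hy e]]]] [t' [y' [s' [hy' e']]]].
  case: e => ex er; case: e' => ex' er'; rewrite er er'.
  have [tt|tt] := eqVneq t t'.
    subst t'; have yy : y = y' by apply: (addrI (rs t *: z)); rewrite -ex.
    by subst y'; rewrite (Mf _ _ _ hy hy').
  exfalso; apply: Hz.
  have e2 : y' - y = (rs t - rs t') *: z.
    by rewrite scalerBl; apply/eqP; rewrite subr_eq addrAC -ex ex' [rs t' *: z + y']addrC addrK.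
  exists ((t - t')^-1 * (-1 * s + s') + 0).
  have := Ml _ _ _ _ ((t - t')^-1) (Ml _ _ _ _ (-1) hy hy') M00.
  rewrite addr0 rsN1 [- y + y']addrC e2 scalerA -rsB mulrC rsV ?subr_eq0 //.
  by rewrite scale1r.
- move=> x r y s u [t [y1 [s1 [h1 [-> ->]]]]] [t' [y2 [s2 [h2 [-> ->]]]]].
  exists (u * t + t'), (rs u *: y1 + y2), (u * s1 + s2); split.
    exact: Ml.
  congr (_, _); last by ring.
  by rewrite scalerDr scalerA -rsM rsD scalerDl addrACA.
- move=> x r [t [y [s [hy [-> ->]]]]].
  have [t0|tn0] := eqVneq t 0.
    by subst t; rewrite rs0 scale0r add0r mul0r add0r; apply: Md.
  have hy1 : M (rs t^-1 *: y + 0, t^-1 * s + 0) by apply: Ml.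
  have hy2 : M (rs (- t^-1) *: y + 0, - t^-1 * s + 0) by apply: Ml.
  rewrite !addr0 mulNr in hy1 hy2.
  have ey : rs t *: z + y = rs t *: (rs t^-1 *: y + z).
    by rewrite scalerDr scalerA rsV // scale1r addrC.
  have es : s = t * (t^-1 * s) by rewrite mulrA mulfV // mul1r.
  rewrite ey nrmZ.
  move: hy1 hy2 es; move: (t^-1 * s) => s1 hy1 hy2 es; subst s.
  have [tpos|tneg] := ltrP 0 t.
    have := cle _ _ hy1; rewrite gtr0_norm //; nra.
  have tlt : t < 0 by rewrite lt_neqAle tn0 tneg.
  have := cge _ _ hy2.
  have -> : rs (- t^-1) *: y - z = - (rs t^-1 *: y + z)
    by rewrite rsN scaleNr opprD.
  rewrite nrmN ltr0_norm //; nra.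
Qed.

Lemma hahn_banach_real : exists h : X -> R,
  [/\ (forall t x y, h (rs t *: x + y) = t * h x + h y),
      (forall x, h x <= nrm x) & h x0 = nrm x0].
Proof.
have [M0 [PM0 maxM0]] := Zorn_bigcup chain_union.
pose M := M0 `|` G0.
have gM : good M by [].
have G0M : G0 `<=` M by move=> p ?; right.
have Hdom z : exists r, M (z, r).
  apply: contrapT => Hz.
  have [c gc] := extend_dom gM G0M Hz.
  set G' := (fun p => _) in gc.
  have MG' : M `<=` G'.
    move=> [y s] hy; exists 0, y, s; split => //.
    by rewrite rs0 scale0r add0r mul0r add0r.
  apply: (maxM0 G').
    split; first by move=> p hp; apply: MG'; left.
    move=> /(_ (z, c)) h.
    have : M0 (z, c).
      apply: h; exists 1, 0, 0; split; first by apply: G0M; exists 0; rewrite rs0 scale0r mul0r.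
      by rewrite rs1 scale1r addr0 mul1r addr0.
    by move=> hz; apply: Hz; exists c; left.
  rewrite /PG setUidl //; by move=> p /G0M /MG'.
pose h x := projT1 (cid (Hdom x)).
have hM x : M (x, h x) by rewrite /h; case: cid.
case: gM => Mf Ml Md.
exists h; split.
- move=> t x y; apply: (Mf (rs t *: x + y)); first exact: hM.
  exact: Ml (hM x) (hM y).
- by move=> x; apply: Md (hM x).
- apply: (Mf x0); first exact: hM.
  by right; exists 1; rewrite rs1 scale1r mul1r.
Qed.


Variable iK : K.
Hypothesis Hdec : (iK = 0 /\ forall a, a = rs (re a)) \/
  (iK * iK = -1 /\ forall a, a = rs (re a) + iK * rs (re (- iK * a))).
Hypothesis reiK : re iK = 0.
Variable x1 : X.
Hypothesis x1n : forall k : K, x1 <> k *: x0.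

Lemma rs_mono a b : a <= b -> rs a <= rs b.
Proof.
rewrite -subr_ge0 -(subr_ge0 (rs a)) -rsB => h.
by rewrite -(ger0_norm h) -rs_norm.
Qed.

Lemma lip_cont (V W : normedModType K) (f : V -> W) (C : K) : 0 < C ->
  (forall x y, `|f x - f y| <= C * `|x - y|) -> continuous f.
Proof.
move=> C0 H x; apply/cvgrPdist_lt => e e0.
have hid : (id : V -> V) @ x --> x := cvg_id.
have pos : 0 < C^-1 * e by rewrite mulr_gt0 ?invr_gt0.
have hn := (cvgrPdist_lt _ _).1 hid (C^-1 * e) pos.
near=> y; apply: (le_lt_trans (H x y)).
rewrite -ltr_pdivlMl //; near: y; exact: hn.
Unshelve. all: by end_near.
Qed.

Lemma nonscalar_gen : exists S0 : X -> X, bounded_op S0 /\ finite_rank S0 /\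
  forall k, S0 <> scaleop k (@idop K X).
Proof.
have [h [hl hle hx0]] := hahn_banach_real.
have h0 : h 0 = 0.
  have := hl 1 0 0; rewrite rs1 scale1r addr0 mul1r => e.
  by apply: (addIr (h 0)); rewrite add0r -e.
have hD x y : h (x + y) = h x + h y by have := hl 1 x y; rewrite rs1 scale1r mul1r.
have hZ t x : h (rs t *: x) = t * h x by have := hl t x 0; rewrite addr0 h0 addr0.
have hN x : h (- x) = - h x by rewrite -rsN1 hZ mulN1r.
have habs x : `|h x| <= nrm x.
  rewrite ler_norml hle andbT lerNl -hN -(nrmN x); exact: hle.
pose F x := rs (h x) - iK * rs (h (iK *: x)).
have FD x y : F (x + y) = F x + F y.
  by rewrite /F scalerDr !hD !rsD; ring.
have FZ a x : F (a *: x) = a * F x.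
  rewrite /F; case: Hdec => [[-> ha]|[i2 ha]].
    rewrite !mul0r !subr0 {1}(ha a) hZ rsM -ha //.
  move: (re a) (re (- iK * a)) (ha a) => u v ea; subst a.
  have e1 : (rs u + iK * rs v) *: x = rs u *: x + rs v *: (iK *: x).
    by rewrite scalerDl [iK * _]mulrC -scalerA.
  have e2 : iK *: ((rs u + iK * rs v) *: x) = rs u *: (iK *: x) + rs (- v) *: x.
    rewrite scalerA [in RHS]scalerA -scalerDl; congr (_ *: _).
    rewrite rsN; ring: i2.
  rewrite e2 e1 !hD !hZ !rsD !rsM !rsN; ring: i2.
have Fb x : `|F x| <= (1 + `|iK| * `|iK|) * `|x|.
  have nb y : `|rs (h y)| <= `|y|.
    rewrite rs_norm; have [_ ->] := re_pos (normr_ge0 y).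
    exact/rs_mono/habs.
  rewrite /F (le_trans (ler_normB _ _)) // normrM mulrDl mul1r.
  apply: lerD; first exact: nb.
  rewrite -mulrA; apply: ler_wpM2l; first exact: normr_ge0.
  by rewrite -normrZ; apply: nb.
have reF x : re (F x) = h x.
  by rewrite /F reD reN mulrC reM reiK mulr0 re_rs subr0.
have Fx0 : F x0 != 0.
  apply/eqP => e; have := reF x0; rewrite e re0 hx0 => /esym /eqP.
  by rewrite (gt_eqF (nrm_pos x0n0)).
pose S0 x := F x *: x0.
exists S0; split; [split|split].
- move=> a u v; rewrite /S0 FD FZ scalerDl scalerA //.
- pose C := (1 + `|iK| * `|iK|) * `|x0| + 1.
  have C0 : 0 < C by rewrite ltr_pwDr // mulr_ge0 // addr_ge0 // mulr_ge0.
  apply: (lip_cont C0) => x y.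
  have -> : S0 x - S0 y = S0 (x - y).
    rewrite /S0 -scalerBl; congr (_ *: _).
    by have := FZ (-1) y; rewrite scaleN1r mulN1r FD => ->.
  rewrite /S0 normrZ mulrC; apply: (le_trans (ler_wpM2l (normr_ge0 x0) (Fb (x - y)))).
  rewrite mulrA ler_wpM2r // ?normr_ge0 // mulrC lerDl //.
- exists 1, (fun _ => x0) => x; exists (fun _ => F x); by rewrite big_ord1.
- move=> k e.
  have e0 := congr1 (fun f => f x0) e; have e1 := congr1 (fun f => f x1) e.
  rewrite /S0 /scaleop /idop /= in e0 e1.
  have kF : k = F x0.
    move/eqP: e0; rewrite -subr_eq0 -scalerBl scaler_eq0 (negbTE x0n0) orbF subr_eq0.
    by move/eqP.
  have kn0 : k != 0 by rewrite kF.
  apply: (@x1n (F x1 / k)); apply: (scalerI kn0).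
  by rewrite -e1 scalerA mulrCA mulfV // mulr1.
Qed.

End HBsec.

Lemma nonscalar_exists (R : realType) (K : numFieldType) (HK : R_or_C R K)
  (Y : normedModType K) (HY : infinite_dimensional Y) :
  exists S0 : Y -> Y, bounded_op S0 /\ finite_rank S0 /\ forall k, S0 <> sc Y k.
Proof.
have [x0 hx0] := HY 0 (fun _ => 0).
have x0n0 : x0 != 0 by apply/eqP => e; apply: (hx0 (fun _ => 0)); rewrite big_ord0.
have [x1 hx1] := HY 1 (fun _ => x0).
have x1n : forall k : K, x1 <> k *: x0.
  by move=> k e; apply: (hx1 (fun _ => k)); rewrite big_ord1.
case: HK => [[f [[g fK gK] fn]]|[f [[g fK gK] fn]]]; have finj := can_inj fK.
- apply: (@nonscalar_gen R K Y g f _ _ _ _ _ _ _ _ x0 x0n0 0 _ _ x1 x1n).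
  + by move=> s t; apply: finj; rewrite rmorphD !gK.
  + by move=> s t; apply: finj; rewrite rmorphM !gK.
  + by apply: finj; rewrite rmorph1 gK.
  + by move=> t; apply: finj; rewrite -fn !gK.
  + by move=> a b; rewrite rmorphD.
  + by move=> t a; rewrite rmorphM gK.
  + by move=> t; rewrite gK.
  + move=> a a0; rewrite fK; split => //.
    by have := normr_ge0 (f a); rewrite fn ger0_norm.
  + by left; split => // a; rewrite fK.
  + by rewrite rmorph0.
- apply: (@nonscalar_gen R K Y (fun t => g (t%:C)%C) (fun a => complex.Re (f a))
     _ _ _ _ _ _ _ _ x0 x0n0 (g 'i%C) _ _ x1 x1n).
  + by move=> s t; apply: finj; rewrite !rmorphD !gK.
  + by move=> s t; apply: finj; rewrite !rmorphM !gK.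
  + by apply: finj; rewrite !rmorph1 gK.
  + by move=> t; apply: finj; rewrite -fn !gK rc_norm.
  + by move=> a b; rewrite rmorphD ReD'.
  + by move=> t a; rewrite rmorphM gK ReM'.
  + by move=> t; rewrite gK.
  + move=> a a0; have : 0 <= f a.
      by have := normr_ge0 (f a); rewrite fn ger0_norm.
    by move=> /pos_real [e r0]; split => //; rewrite -e fK.
  + right; split.
      by apply: finj; rewrite rmorphM gK ii rmorphN1.
    move=> a; apply: finj; rewrite rmorphD rmorphM !gK rmorphM rmorphN gK ReNi.
    exact: complexE.
  + by rewrite gK.
Qed.

Theorem lemma2p1 (R : realType) (K : numFieldType) (HK : R_or_C R K)
  (X Y : completeNormedModType K)
  (HX : infinite_dimensional X) (HY : infinite_dimensional Y)
  (A : set (X -> X)) (B : set (Y -> Y))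
  (HA : standard_op_alg A) (HB : standard_op_alg B)
  (phi : (X -> X) -> (Y -> Y)) (Hphi : set_bij A B phi)
  (Hq : forall M : opmx2 X, (forall i j, A (M i j)) ->
          (quadratic2 M <-> quadratic2 (fun i j => phi (M i j)))) :
  phi (fun _ => 0) = (fun _ => 0) /\
  phi @` [set scaleop a (@idop K X) | a in [set: K]] = [set scaleop a (@idop K Y) | a in [set: K]] /\
  exists lambda : K, phi (@idop K X) = scaleop lambda (@idop K Y).
Proof.
case: HA => HAb [_ [HAsc [_ [HAid [_ _]]]]].
case: HB => HBb [_ [HBsc [_ [HBid [HBfr _]]]]].
case: Hphi => Hfun _ Hsurj.
have Asc c : A (sc X c) by exact: HAsc.
have Az : A (zop X) by rewrite -sc0.
have Bsc c : B (sc Y c) by exact: HBsc.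
have tr a b c d : A a -> A b -> A c -> A d ->
    quadratic2 (mx2 a b c d) <-> quadratic2 (mx2 (phi a) (phi b) (phi c) (phi d)).
  move=> Aa Ab Ac Ad.
  have -> : mx2 (phi a) (phi b) (phi c) (phi d) = (fun i j => phi (mx2 a b c d i j)).
    by apply/funext => i; apply/funext => j; rewrite /mx2; case: ifP; case: ifP.
  by apply: Hq => i j; rewrite /mx2; case: ifP; case: ifP.
have [S0 [bS0 [frS0 nsS0]]] := nonscalar_exists HK HY.
have Q0 S' : B S' -> quadratic2 (mx2 (phi (zop X)) S' (phi (zop X)) (phi (zop X))).
  move=> /Hsurj [S AS <-]; apply/(tr _ _ _ _ Az AS Az Az).
  rewrite -!sc0; have := quad_sc 0 (HAb _ AS); by rewrite sc0.
have phi0 : phi (zop X) = zop Y.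
  apply: (zero_char (Q0 _ HBid) (Q0 _ (HBfr _ bS0 frS0)) bS0 nsS0).
have [Sid ASid phiSid] := Hsurj _ HBid.
have fwd c : exists c', phi (sc X c) = sc Y c'.
  apply: (@scal_char _ _ _ (zop Y)); rewrite -phiSid -phi0.
  by apply/(tr _ _ _ _ (Asc c) ASid Az (Asc c)); exact: quad_sc (HAb _ ASid).
split; first exact: phi0.
split.
  apply/seteqP; split.
    move=> _ [_ [c _ <-] <-]; have [c' ->] := fwd c; by exists c'.
  move=> _ [c _ <-]; have [T AT phiT] := Hsurj _ (Bsc c).
  have [c' Tc'] : exists c', T = sc X c'.
    apply: (@scal_char _ _ _ (zop X)).
    apply/(tr _ _ _ _ AT HAid Az AT); rewrite phiT phi0.
    exact: quad_sc (HBb _ (Hfun _ HAid)).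
  by exists T => //; exists c'; rewrite ?Tc'.
have [c' h] := fwd 1; exists c'; by rewrite -[in LHS]sc1 h.
Qed.
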